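(* Let $(u_n)_{n\in\mathbb N}$ be a nondecreasing sequence in $\{0,1\}$ and put $v_n=u_n+1$. In Martin-Löf's sequent calculus for ordinals, let $a=\mathrm S(\underline{u_n})_{n\in\mathbb N}$ and $b=\mathrm S(\underline{v_n})_{n\in\mathbb N}$. Then the sequent consisting of the single atomic formula $a<b$ is provable.
   Context: Martin-Löf's system: ordinals are inductively generated by the rule that for every finite or infinite sequence $u=(u_0,u_1,\dots)$ of ordinals (possibly empty), $\mathrm S(u)$ is an ordinal. $\underline 0$ is $\mathrm S$ of the empty sequence, $\mathrm{succ}(a)$ is $\mathrm S$ of the one-element sequence $(a)$, and $\underline{k+1}=\mathrm{succ}(\underline k)$. Atomic formulae are $a<b$ and $a\le b$ for ordinals $a,b$. A sequent is a finite set $\Gamma$ of atomic formulae (intuitively their classical disjunction); provable sequents are generated inductively by the two rules: from $\Gamma, a\le u_n$ for some index $n$ of $u$, infer $\Gamma, a<\mathrm S(u)$; from $\Gamma, u_n<b$ for every index $n$ of $u$, infer $\Gamma,\mathrm S(u)\le b$ (in particular $\Gamma,\mathrm S(\text{empty})\le b$ is provable). Here ''$\Gamma,\varphi$'' denotes $\Gamma\cup\{\varphi\}$. *)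

(* Defs.v *)
From Stdlib Require Import List Arith.
Import ListNotations.

Inductive arity : Type := Fin (n : nat) | Inf.

Definition idx (k : arity) : Type :=
  match k with
  | Fin n => {i : nat | i < n}
  | Inf => nat
  end.

Inductive ord : Type := S (k : arity) (u : idx k -> ord).

Definition empty_fun (A : Type) : idx (Fin 0) -> A :=
  fun i => match Nat.nlt_0_r _ (proj2_sig i) with end.

Definition ord0 : ord := S (Fin 0) (empty_fun ord).
Definition succ (a : ord) : ord := S (Fin 1) (fun _ => a).
Fixpoint num (k : nat) : ord :=
  match k with
  | O => ord0
  | Datatypes.S k => succ (num k)
  end.

Inductive atom : Type := Lt (a b : ord) | Le (a b : ord).

(* A sequent is a finite set of atoms, represented by a list up to
   set equality.  [same_set D (phi :: G)] means D = G ∪ {phi}. *)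
Definition same_set (D E : list atom) : Prop := forall x, In x D <-> In x E.

Inductive provable : list atom -> Prop :=
  | rule_lt (G D : list atom) (a : ord) (k : arity) (u : idx k -> ord) (n : idx k) :
      provable (Le a (u n) :: G) ->
      same_set D (Lt a (S k u) :: G) ->
      provable D
  | rule_le (G D : list atom) (b : ord) (k : arity) (u : idx k -> ord) :
      (forall n : idx k, provable (Lt (u n) b :: G)) ->
      same_set D (Le (S k u) b :: G) ->
      provable D.

(* Main.v *)
Require Import Defs.
From Stdlib Require Import List Arith Lia Classical.
Import ListNotations.

Lemma ss_refl D : same_set D D.
Proof. intro x; tauto. Qed.

Lemma num_both i : forall j G,
  (i <= j -> provable (Le (num i) (num j) :: G)) /\
  (i < j -> provable (Lt (num i) (num j) :: G)).
Proof.
  induction i as [|i IH]; intros j G; split; intro H.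
  - eapply (rule_le G _ (num j) (Fin 0) (empty_fun ord)).
    + intros [k Hk]; lia.
    + apply ss_refl.
  - destruct j as [|j]; [lia|].
    eapply (rule_lt G _ _ (Fin 1) (fun _ => num j) (exist _ 0 (Nat.lt_0_1))).
    + eapply (rule_le G _ (num j) (Fin 0) (empty_fun ord)).
      * intros [k Hk]; lia.
      * apply ss_refl.
    + apply ss_refl.
  - eapply (rule_le G _ (num j) (Fin 1) (fun _ => num i)).
    + intros _. destruct (IH j G) as [_ H2]; apply H2; lia.
    + apply ss_refl.
  - destruct j as [|j]; [lia|].
    eapply (rule_lt G _ _ (Fin 1) (fun _ => num j) (exist _ 0 (Nat.lt_0_1))).
    + eapply (rule_le G _ (num j) (Fin 1) (fun _ => num i)).
      * intros _. destruct (IH j G) as [_ H2]; apply H2; lia.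
      * apply ss_refl.
    + apply ss_refl.
Qed.

Theorem lemma5p4 (u : nat -> nat)
  (hu01 : forall n, u n <= 1)
  (hmono : forall m n, m <= n -> u m <= u n) :
  provable [Lt (S Inf (fun n : idx Inf => num (u n)))
               (S Inf (fun n : idx Inf => num (u n + 1)))].
Proof.
  assert (Hn : exists n : nat, forall m, u m <= u n).
  { destruct (classic (exists n, u n = 1)) as [[n Hn]|Hn].
    - exists n; intro m; specialize (hu01 m); lia.
    - exists 0; intro m; specialize (hu01 m).
      assert (u m <> 1) by (intro E; apply Hn; exists m; exact E); lia. }
  destruct Hn as [n Hn].
  eapply (rule_lt [] _ _ Inf (fun n : idx Inf => num (u n + 1)) n).
  - eapply (rule_le [] _ _ Inf (fun n : idx Inf => num (u n))).
    + intro m. destruct (num_both (u m) (u n + 1) []) as [_ H2].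
      apply H2. specialize (Hn m); lia.
    + apply ss_refl.
  - apply ss_refl.
Qed.
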